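(* Let $X$ and $Y$ be real Hilbert spaces with $X \neq \{0\}$, let $a$ and $b$ be continuous bilinear forms on $X \times Y$, and let $A, B : X \to Y$ be continuous linear operators. Suppose there are constants $C_1 > 0$ and $C_2 \geq 0$ such that for all $u \in X$: $$b(u, B u) + a(u, A u) \geq \frac{1}{C_1} \| u\|^2,$$ $$b(u, A u) \geq 0, \qquad |a(u, B u)| \leq C_2\, a(u, Au).$$ Then $b+a$ satisfies an inf-sup condition on $X \times Y$: there exists $c > 0$ such that $$\inf_{u \in X\setminus\{0\}} \ \sup_{v \in Y\setminus\{0\}} \frac{|(b+a)(u,v)|}{\| u \| \, \|v\| } \geq c.$$ *)

(* Defs.v *)
From HB Require Import structures.
From mathcomp Require Import all_boot all_order all_algebra.
From mathcomp Require Import all_classical all_reals all_analysis.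
Set Implicit Arguments. Unset Strict Implicit. Unset Printing Implicit Defensive.
Import Order.TTheory GRing.Theory Num.Theory.
Import numFieldNormedType.Exports.
Local Open Scope classical_set_scope.
Local Open Scope ring_scope.

(* An inner product on a real normed space V inducing its norm:
   bilinear (linear in the first argument + symmetric), and
   `|x| = sqrt <x,x>.  Together with completeness of V
   (V : completeNormedModType R) this makes V a real Hilbert space. *)
Definition inner_product_inducing_norm (R : realType) (V : normedModType R)
  (ip : V -> V -> R) : Prop :=
  [/\ (forall (k : R) (x y z : V), ip (k *: x + y) z = k * ip x z + ip y z),
      (forall x y : V, ip x y = ip y x) &
      (forall x : V, `|x| = Num.sqrt (ip x x))].

Definition is_hilbert (R : realType) (V : completeNormedModType R) : Prop :=
  exists ip : V -> V -> R, inner_product_inducing_norm ip.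

Definition bilinear_form (R : realType) (X Y : normedModType R)
  (a : X -> Y -> R) : Prop :=
  (forall (k : R) (x x' : X) (y : Y), a (k *: x + x') y = k * a x y + a x' y) /\
  (forall (k : R) (x : X) (y y' : Y), a x (k *: y + y') = k * a x y + a x y').

Definition continuous_bilinear_form (R : realType) (X Y : normedModType R)
  (a : X -> Y -> R) : Prop :=
  bilinear_form a /\ continuous (fun p : X * Y => a p.1 p.2).

Definition infsup (R : realType) (X Y : normedModType R) (f : X -> Y -> R)
  : \bar R :=
  ereal_inf [set ereal_sup [set ((`|f u v| / (`|u| * `|v|))%:E) | v in ~` [set (0 : Y)]]
            | u in ~` [set (0 : X)]].

(* Main.v *)
Require Import Defs.
From HB Require Import structures.
From mathcomp Require Import all_boot all_order all_algebra.
From mathcomp Require Import all_classical all_reals all_analysis.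
From mathcomp Require Import ring lra.
Import Order.TTheory GRing.Theory Num.Theory.
Import numFieldNormedType.Exports.
Local Open Scope classical_set_scope.
Local Open Scope ring_scope.

Lemma lin_bound (R : realType) (X Y : normedModType R) (A : {linear X -> Y}) :
  continuous A -> exists2 r : R, 0 < r & forall x, `|A x| <= r * `|x|.
Proof.
move=> hA; apply: pinfty_ex_gt0; apply/linear_boundedP.
exact/linear_bounded_continuous.
Qed.

Theorem proposition2 (R : realType) (X Y : completeNormedModType R)
  (hX : is_hilbert X) (hY : is_hilbert Y)
  (hX0 : exists x : X, x != 0)
  (a b : X -> Y -> R)
  (ha : continuous_bilinear_form a) (hb : continuous_bilinear_form b)
  (A B : {linear X -> Y}) (hA : continuous A) (hB : continuous B)
  (C1 C2 : R) (hC1 : 0 < C1) (hC2 : 0 <= C2)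
  (h1 : forall u : X, b u (B u) + a u (A u) >= C1^-1 * `|u| ^+ 2)
  (h2 : forall u : X, b u (A u) >= 0)
  (h3 : forall u : X, `|a u (B u)| <= C2 * a u (A u)) :
  exists c : R, 0 < c /\ (c%:E <= infsup (fun u v => (b u v + a u v)%R))%E.
Proof.
have [rA rA0 bA] := @lin_bound _ _ _ A hA.
have [rB rB0 bB] := @lin_bound _ _ _ B hB.
set M := rB + (1 + C2) * rA.
have M0 : 0 < M by rewrite /M; nra.
exists (C1 * M)^-1; split; first by rewrite invr_gt0 mulr_gt0.
apply: le_ereal_inf_tmp => _ [u /= u0 <-].
have nu0 : 0 < `|u| by rewrite normr_gt0; apply/eqP.
apply: le_ereal_sup_tmp.
set v := (1 + C2) *: A u + B u.
have bv : `|v| <= M * `|u|.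
  rewrite /v (le_trans (ler_normD _ _)) // normrZ ger0_norm; last by lra.
  have := bA u; have := bB u; rewrite /M; nra.
have fv : C1^-1 * `|u| ^+ 2 <= b u v + a u v.
  rewrite /v (proj2 (proj1 ha)) (proj2 (proj1 hb)).
  have H1 := h1 u; have H2 := h2 u.
  have := h3 u; rewrite ler_norml => /andP [H4 _].
  nra.
have vpos : 0 < `|v|.
  rewrite lt_neqAle normr_ge0 andbT eq_sym; apply/negP => /eqP/normr0_eq0 v0.
  have : a u 0 = 0 /\ b u 0 = 0.
    have ha0 := (proj2 (proj1 ha)) 1 u 0 0.
    have hb0 := (proj2 (proj1 hb)) 1 u 0 0.
    rewrite scaler0 addr0 !mul1r in ha0 hb0.
    split; lra.
  move=> [a0 b0]; move: fv; rewrite v0 a0 b0 addr0.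
  have : 0 < C1^-1 * `|u| ^+ 2 by rewrite mulr_gt0 ?invr_gt0 ?exprn_gt0.
  by move=> /lt_le_trans H /H; rewrite ltxx.
exists ((`|b u v + a u v| / (`|u| * `|v|))%:E).
  by exists v => //=; apply/eqP; rewrite -normr_gt0.
rewrite lee_fin ler_pdivlMr ?mulr_gt0 //.
apply: le_trans (le_trans fv (ler_norm _)).
rewrite invfM -mulrA; apply: ler_wpM2l; first by rewrite invr_ge0 ltW.
have Hm : `|u| * `|v| <= M * `|u| ^+ 2 by rewrite expr2; nra.
by rewrite mulrC ler_pdivrMr // [X in _ <= X]mulrC; exact: Hm.
Qed.
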